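(* In the transactional panorama model with the lenses and metrics described in the context, $S(\mathrm{LCMB}) \le S(\mathrm{LCNB})$ and $S(\mathrm{ICNB}) \le S(\mathrm{LCNB})$, while the order between $S(\mathrm{LCMB})$ and $S(\mathrm{ICNB})$ depends on the workload (neither inequality between them holds for all workloads).
   Context: A view graph is a DAG on a set $N$ of nodes (source data and views). Write transactions are processed one at a time; write transaction $w^{t_i}$ creates version $G^{t_i}$ with state set $V^{t_i}$ containing, for each node $n_k$, either its computed new result $v_k^{t_i}$, a placeholder $UC_k^{t_i}$ if $w^{t_i}$ updates $n_k$ but has not yet computed it, or its result from the previous version if $n_k$ is not updated. A version is committed once all its new results are computed; at any time there is the committed graph (most recently committed version, no UCs) and the latest graph (version of the most recent write transaction). Read transactions $r^{s_1},\dots,r^{s_m}$ each read the views in the current viewport and return immediately a set $H^{s_i}$ of states (results or UCs); $Time(r^{s_i})$ is its return time. A returned state's timestamp is that of its version. Lenses: LCNB returns the viewport states from the more recent of the committed and latest graphs that has zero UCs for the viewport. LCMB: if reading either the committed or the latest graph preserves monotonicity (no view gets a state with smaller timestamp than previously read), behave like LCNB; otherwise read the latest graph. ICNB returns, for each view independently, its most recently computed result. Staleness for $R=\{r^{s_1},\dots,r^{s_m}\}$: $S(R)=\sum_{i=1}^{m-1}\sum_{v_k^{t_j}\in H^{s_i}_{qr}}\mathbf{1}[v_k^{t_j}\notin V^{t_i}]\,(Time(r^{s_{i+1}})-Time(r^{s_i}))$ where $H^{s_i}_{qr}$ is the set of view results (non-UC states) in $H^{s_i}$ and $G^{t_i}$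 is the latest version before $r^{s_i}$ starts. $S(A)$ denotes staleness under lens $A$; lenses are compared on the same write transactions, the same order of computing new view results, and the same sequence of read transactions. A workload consists of the view graph, viewports, and read/write transactions. *)

(* Defs.v *)
From mathcomp Require Import all_boot all_order all_algebra.
Set Implicit Arguments. Unset Strict Implicit. Unset Printing Implicit Defensive.
Import Order.TTheory GRing.Theory Num.Theory.

Section Model.
Variables (N : finType) (R : realFieldType).

(* An execution is a trace of events, in the order they happen.
   - [EWrite U]     : a write transaction arrives, creating the next version
                      (version indices 1,2,...; version 0 is the initial
                      graph, all of whose states are computed results);
                      U is the set of nodes it updates.
   - [ECompute j k] : the new result v_k^{t_j} of node k for version j is computed.
   - [ERead vp t]   : a read transaction reading the viewport vp; it returns
                      immediately, at time t (Time(r)). *)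
Inductive event :=
  | EWrite of {set N}
  | ECompute of nat & N
  | ERead of {set N} & R.

Definition ev0 : event := EWrite set0.

Definition writes (pre : seq event) : seq {set N} :=
  pmap (fun ev => if ev is EWrite U then Some U else None) pre.

Definition nver (pre : seq event) : nat := size (writes pre).

Definition upd (pre : seq event) (j : nat) (k : N) : bool :=
  (0 < j <= nver pre) && (k \in nth set0 (writes pre) j.-1).

Definition computed (pre : seq event) (j : nat) (k : N) : bool :=
  has (fun ev => if ev is ECompute j' k' then (j' == j) && (k' == k) else false) pre.

(* version whose state node k carries in version i: last version <= i updating k *)
Definition last_upd (pre : seq event) (i : nat) (k : N) : nat :=
  \max_(j < i.+1 | upd pre j k) j.

(* A state of node k: (timestamp j, b), where b = true means the result
   v_k^{t_j} and b = false means the placeholder UC_k^{t_j}. *)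
Definition state (pre : seq event) (i : nat) (k : N) : nat * bool :=
  let j := last_upd pre i k in (j, (j == 0%N) || computed pre j k).

Definition complete (pre : seq event) (j : nat) : bool :=
  [forall k, upd pre j k ==> computed pre j k].

(* committed graph: the most recent version that is committed, versions
   being committed in order *)
Definition committed (pre : seq event) : nat :=
  \max_(i < (nver pre).+1 | [forall j : 'I_i.+1, complete pre j]) i.

Definition no_uc (pre : seq event) (g : nat) (vp : {set N}) : bool :=
  [forall k in vp, (state pre g k).2].

Inductive lens := LCNB | LCMB | ICNB.

Definition lcnb_graph (pre : seq event) (vp : {set N}) : nat :=
  if no_uc pre (nver pre) vp then nver pre else committed pre.

(* most recently computed result of k (0 = initial result) *)
Definition last_comp (pre : seq event) (k : N) : nat :=
  foldl (fun acc ev => if ev is ECompute j k' then (if k' == k then j else acc) else acc)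
        0%N pre.

(* history: largest timestamp previously read for each view *)
Definition monotone (hist : N -> nat) (pre : seq event) (g : nat) (vp : {set N}) : bool :=
  [forall k in vp, hist k <= (state pre g k).1].

(* returned states (one per node; only those in vp matter) *)
Definition read (L : lens) (hist : N -> nat) (pre : seq event) (vp : {set N})
  : N -> nat * bool :=
  match L with
  | LCNB => state pre (lcnb_graph pre vp)
  | LCMB => let g := lcnb_graph pre vp in
            if monotone hist pre g vp then state pre g else state pre (nver pre)
  | ICNB => fun k => (last_comp pre k, true)
  end.

Definition upd_hist (hist : N -> nat) (vp : {set N}) (H : N -> nat * bool) : N -> nat :=
  fun k => if k \in vp then maxn (hist k) (H k).1 else hist k.

Definition nstale (pre : seq event) (vp : {set N}) (H : N -> nat * bool) : nat :=
  #|[set k in vp | (H k).2 && (H k != state pre (nver pre) k)]|.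

Fixpoint run_aux (L : lens) (hist : N -> nat) (pre rest : seq event) : seq (R * nat) :=
  match rest with
  | [::] => [::]
  | ev :: rest' =>
      match ev with
      | ERead vp t =>
          let H := read L hist pre vp in
          (t, nstale pre vp H) :: run_aux L (upd_hist hist vp H) (rcons pre ev) rest'
      | _ => run_aux L hist (rcons pre ev) rest'
      end
  end.

Definition run (L : lens) (tr : seq event) : seq (R * nat) :=
  run_aux L (fun _ => 0%N) [::] tr.

Fixpoint stale_sum (l : seq (R * nat)) : R :=
  match l with
  | (t, c) :: ((t', _) :: _) as rest => (c%:R * (t' - t) + stale_sum rest)%R
  | _ => 0%R
  end.

Definition acyclic (e : rel N) : Prop := forall x y, e x y -> ~~ connect e y x.

Definition is_view (e : rel N) (k : N) : bool := [exists p, e p k].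

Definition read_times (tr : seq event) : seq R :=
  pmap (fun ev => if ev is ERead _ t then Some t else None) tr.

Definition valid_trace (e : rel N) (tr : seq event) : Prop :=
  (forall p, p < size tr ->
     match nth ev0 tr p with
     | ECompute j k =>
         let pre := take p tr in
         [&& 0 < j <= nver pre, upd pre j k, ~~ computed pre j k
           & [forall j' : 'I_j, complete pre j']]  (* one write at a time *)
     | ERead vp _ => vp \subset [pred k | is_view e k]
     | EWrite _ => true
     end)
  /\ sorted <=%R (read_times tr).

End Model.

Record workload (R : realFieldType) := Workload {
  wl_node : finType;
  wl_edge : rel wl_node;
  wl_trace : seq (event wl_node R) }.

Definition valid_workload (R : realFieldType) (w : workload R) : Prop :=
  @acyclic (wl_node w) (@wl_edge R w) /\
  @valid_trace (wl_node w) R (@wl_edge R w) (@wl_trace R w).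

Definition S (R : realFieldType) (L : lens) (w : workload R) : R :=
  @stale_sum R (@run (wl_node w) R L (@wl_trace R w)).

(* Main.v *)
Require Import Defs.
From mathcomp Require Import all_boot all_order all_algebra.
From mathcomp Require Import lra.
Import Order.TTheory GRing.Theory Num.Theory.
Set Implicit Arguments. Unset Strict Implicit.


Section Gen.
Variables (N : finType) (R : realFieldType).
Implicit Types (pre : seq (event N R)) (ev : event N R).

Lemma maxP n (P : pred 'I_n) :
  (\max_(i < n | P i) (i : nat) = 0%N) \/ exists2 i : 'I_n, P i & \max_(i < n | P i) (i:nat) = i.
Proof.
apply: (big_ind (fun m => m = 0%N \/ exists2 i : 'I_n, P i & m = i)); first by left.
- move=> x y Hx Hy; rewrite /maxn; case: (ltnP x y) => H //.


- by move=> i Pi; right; exists i.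
Qed.

Lemma writes_rcons pre ev :
  writes (rcons pre ev) = writes pre ++ (if ev is EWrite U then [:: U] else [::]).
Proof. by rewrite /writes -cats1 pmap_cat; case: ev. Qed.

Lemma upd_le pre j k : upd pre j k -> (0 < j <= nver pre).
Proof. by case/andP. Qed.

Lemma upd_rcons pre ev j k : j <= nver pre -> upd (rcons pre ev) j k = upd pre j k.
Proof.
rewrite /upd /nver writes_rcons size_cat nth_cat.
case: j => [|j] H //=.
by rewrite H (leq_trans H (leq_addr _ _)).
Qed.

Lemma upd_mono pre ev j k : upd pre j k -> upd (rcons pre ev) j k.
Proof. move=> u; rewrite upd_rcons //; by case/andP: (upd_le u). Qed.

Lemma computed_rcons pre ev j k : computed (rcons pre ev) j k =
  (if ev is ECompute j' k' then (j' == j) && (k' == k) else false) || computed pre j k.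
Proof. by rewrite /computed has_rcons. Qed.

Lemma complete_mono pre ev j : j <= nver pre -> complete pre j -> complete (rcons pre ev) j.
Proof.
move=> Hj /forallP H; apply/forallP => k; rewrite upd_rcons //; apply/implyP => u.
by rewrite computed_rcons (implyP (H k) u) orbT.
Qed.

Lemma last_comp_rcons pre ev k : last_comp (rcons pre ev) k =
  if ev is ECompute j k' then (if k' == k then j else last_comp pre k) else last_comp pre k.
Proof. by rewrite /last_comp foldl_rcons; case: ev. Qed.

Lemma lc_comp pre k : last_comp pre k != 0 -> computed pre (last_comp pre k) k.
Proof.
elim/last_ind: pre => [|pre ev IH] //.
rewrite last_comp_rcons computed_rcons.
case: ev => [U|j k'|vp t] /=; try by move=> H; rewrite IH ?orbT.
case: (eqVneq k' k) => [_|ne] H; first by rewrite !eqxx.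
by rewrite IH ?orbT.
Qed.

Definition vstep pre ev : bool := match ev with
 | ECompute j k => [&& 0 < j <= nver pre, upd pre j k, ~~ computed pre j k
                     & [forall j' : 'I_j, complete pre j']]
 | _ => true end.

Definition Inv pre := forall j k, computed pre j k ->
  [/\ upd pre j k, (forall j', j' < j -> complete pre j') & j <= last_comp pre k].

Lemma Inv_step pre ev : Inv pre -> vstep pre ev -> Inv (rcons pre ev).
Proof.
move=> I V j k; rewrite computed_rcons.
case Hc: (computed pre j k).
- move=> _; have [U C L] := I j k Hc; have /andP[_ Hj] := upd_le U.
  split; first exact: upd_mono.
  + move=> j' lt; apply: complete_mono; last exact: C.
    exact: leq_trans (ltnW lt) Hj.
  + rewrite last_comp_rcons; case: ev V => // j0 k0 /= /and4P[_ U0 NC _].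
    case: eqP => // e; subst k0.
    rewrite leqNgt; apply/negP => lt.
    have := C _ lt; move/forallP/(_ k)/implyP/(_ U0) => c0.
    by rewrite c0 in NC.
- rewrite orbF; case: ev V => // j0 k0 /= /and4P[_ U0 NC /forallP F] /andP[/eqP e1 /eqP e2].
  subst j0 k0; have /andP[_ Hj] := upd_le U0.
  split; first exact: upd_mono.
  + move=> j' lt; apply: complete_mono; first exact: leq_trans (ltnW lt) Hj.
    exact: (F (Ordinal lt)).
  + by rewrite last_comp_rcons eqxx.
Qed.

Lemma Inv_take tr : (forall p, p < size tr -> vstep (take p tr) (nth (ev0 N R) tr p)) ->
  forall n, Inv (take n tr).
Proof.
move=> V; elim => [|n IH]; first by rewrite take0.
case: (ltnP n (size tr)) => H.
- rewrite (take_nth (ev0 N R) H); apply: Inv_step => //; exact: V.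
- by rewrite take_oversize ?(leq_trans H) // -(take_oversize H).
Qed.

Lemma lastupd_ge pre i k j : j <= i -> upd pre j k -> j <= last_upd pre i k.
Proof.
move=> ji u; rewrite /last_upd; have lt : j < i.+1 by [].
exact: (@leq_bigmax_cond _ (fun j0 : 'I_i.+1 => upd pre j0 k) (fun j0 => nat_of_ord j0) (Ordinal lt)).
Qed.

Lemma lastupd_P pre i k : last_upd pre i k = 0 \/ (upd pre (last_upd pre i k) k /\ last_upd pre i k <= i).
Proof.
rewrite /last_upd; case: (maxP (fun j : 'I_i.+1 => upd pre j k)) => [->|[j u ->]]; first by left.
by right; split; last rewrite -ltnS.
Qed.

Lemma key pre k : Inv pre -> (state pre (nver pre) k).2 ->
  last_comp pre k = last_upd pre (nver pre) k.
Proof.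
move=> I /= /orP H; apply/eqP; rewrite eqn_leq; apply/andP; split.
- case: (eqVneq (last_comp pre k) 0) => [->//|nz].
  have c := lc_comp nz; have [u _ _] := I _ _ c.
  apply: lastupd_ge => //; by case/andP: (upd_le u).
- case: H => [/eqP->//|c]; by have [_ _] := I _ _ c.
Qed.

Lemma comm_ok pre k : (state pre (committed pre) k).2.
Proof.
rewrite /state /= /committed.
have [c0|[i F ci]] := maxP (fun i : 'I_(nver pre).+1 => [forall j : 'I_i.+1, complete pre j]).
- rewrite c0; case: (lastupd_P pre 0 k) => [->//|[u]].
  by rewrite leqn0 => /eqP E; rewrite E in u.
- rewrite ci; case: (lastupd_P pre i k) => [->//|[u le]].
  apply/orP; right.
  have := forallP F (Ordinal (le : last_upd pre i k < i.+1)).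
  by move/forallP/(_ k)/implyP/(_ u).
Qed.

Lemma icnb_le pre vp h1 h2 : Inv pre ->
  nstale pre vp (read ICNB h1 pre vp) <= nstale pre vp (read LCNB h2 pre vp).
Proof.
move=> I; rewrite /nstale /read; apply: subset_leq_card; apply/subsetP => k.
rewrite !in_set => /andP[kv /andP[_ ne]]; rewrite kv andTb.
case s2: (state pre (nver pre) k).2.
- have E : state pre (nver pre) k = (last_comp pre k, true).
    by have K := key I s2; move: K s2; rewrite /state /= => -> ->.
  by rewrite E eqxx in ne.
- rewrite /lcnb_graph.
  have -> : no_uc pre (nver pre) vp = false.
    by apply/negbTE/negP => /forall_inP /(_ k kv); rewrite s2.
  rewrite comm_ok andTb; apply/eqP => E.
  by have := comm_ok pre k; rewrite E s2.
Qed.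

Lemma lcmb_le pre vp h1 h2 :
  nstale pre vp (read LCMB h1 pre vp) <= nstale pre vp (read LCNB h2 pre vp).
Proof.
rewrite /=; case: ifP => _ //.
rewrite /nstale (_ : [set _ in vp | _] = set0) ?cards0 //.
by apply/setP => k; rewrite !inE eqxx !andbF.
Qed.

Lemma run_aux_times L h pre rest : map fst (run_aux L h pre rest) = read_times rest.
Proof.
rewrite /read_times; elim: rest h pre => [|ev rest IH] h pre //=.
by case: ev => [U|j k|vp t] /=; rewrite IH.
Qed.

Lemma run_aux_le tr L1 L2 (P : seq (event N R) -> Prop) :
  (forall n, P (take n tr)) ->
  (forall pre vp h1 h2, P pre ->
     nstale pre vp (read L1 h1 pre vp) <= nstale pre vp (read L2 h2 pre vp)) ->
  forall rest pre h1 h2, pre ++ rest = tr ->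
  all2 (fun a b : R * nat => a.2 <= b.2) (run_aux L1 h1 pre rest) (run_aux L2 h2 pre rest).
Proof.
move=> HP Hle; elim=> [|ev rest IH] pre h1 h2 E //=.
case: ev E => [U|j k|vp t] E /=; try (apply: IH; by rewrite cat_rcons).
rewrite Hle ?IH ?cat_rcons //.
by move: (HP (size pre)); rewrite -E take_size_cat.
Qed.

Lemma ss_cons2 (t t' : R) c c' (l : seq (R * nat)) :
  stale_sum ((t, c) :: (t', c') :: l) = (c%:R * (t' - t) + stale_sum ((t', c') :: l))%R.
Proof. by []. Qed.

Lemma ss_le (l1 l2 : seq (R * nat)) : map fst l1 = map fst l2 ->
  sorted <=%R (map fst l2) -> all2 (fun a b : R * nat => a.2 <= b.2) l1 l2 ->
  (stale_sum l1 <= stale_sum l2)%R.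
Proof.
elim: l1 l2 => [|[t c] l1 IH] [|[t2 d] l2] // E S A.
have [E1 E2] : t = t2 /\ map fst l1 = map fst l2 by move: E => /= [-> ->].
have /andP[cd A'] : (c <= d) && all2 (fun a b : R * nat => a.2 <= b.2) l1 l2 := A.
have S' : sorted <=%R (map fst l2) := path_sorted S.
have IH' := IH l2 E2 S' A'.
subst t2; move: IH' S E2 {A IH S' A' E}.
case: l1 l2 => [|[t' c'] l1] [|[t2' d'] l2] // IH' S E2.
have e : t' = t2' by move: E2 => /= [->].
subst t2'; rewrite !ss_cons2; apply: lerD => //.
have /andP[tt' _] : (t <= t')%R && path <=%R t' (map fst l2) := S.
apply: ler_wpM2r; first by rewrite subr_ge0.
by rewrite ler_nat.
Qed.

Lemma run_le tr L1 L2 (P : seq (event N R) -> Prop) :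
  (forall n, P (take n tr)) ->
  (forall pre vp h1 h2, P pre ->
     nstale pre vp (read L1 h1 pre vp) <= nstale pre vp (read L2 h2 pre vp)) ->
  sorted <=%R (read_times tr) ->
  (stale_sum (run L1 tr) <= stale_sum (run L2 tr))%R.
Proof.
move=> HP Hle S; apply: ss_le; rewrite ?run_aux_times //.
exact: (run_aux_le HP Hle).
Qed.
End Gen.

Lemma ns_latest (N : finType) (R : realFieldType) (pre : seq (event N R)) vp :
  nstale pre vp (state pre (nver pre)) = 0.
Proof.
rewrite /nstale (_ : [set _ in vp | _] = set0) ?cards0 //.
by apply/setP => k; rewrite !inE eqxx !andbF.
Qed.


Section Ex.
Variable R : realFieldType.
Definition n0 : 'I_3 := ord0.
Definition n1 : 'I_3 := @Ordinal 3 1 isT.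
Definition n2 : 'I_3 := @Ordinal 3 2 isT.
Definition U : {set 'I_3} := [set n1; n2].
Definition ed : rel 'I_3 := fun x y => (x == n0) && (y != n0).

Lemma acyc : acyclic ed.
Proof.
move=> x y /andP[x0 y0]; apply/negP => /connectP[[|z p] /= P E].
- by subst x; rewrite x0 in y0.
- by move: P => /andP[/andP[/eqP E' _] _]; rewrite E' eqxx in y0.
Qed.

Section Pre.
Variable pre : seq (event 'I_3 R).
Hypothesis Hw : writes pre = [:: U].
Hypothesis Hc : forall j k, computed pre j k = (j == 1) && (k == n1).
Hypothesis Hl : forall k, last_comp pre k = if k == n1 then 1 else 0.

Lemma nv : nver pre = 1. Proof. by rewrite /nver Hw. Qed.
Lemma updE j k : upd pre j k = (j == 1) && (k \in U).
Proof. rewrite /upd nv Hw; case: j => [|[|j]] //. Qed.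
Lemma lu1 k : k \in U -> last_upd pre 1 k = 1.
Proof.
move=> kU; apply/eqP; rewrite eqn_leq; apply/andP; split.
- by case: (lastupd_P pre 1 k) => [->|[]].
- by apply: lastupd_ge => //; rewrite updE eqxx.
Qed.
Lemma lu0 k : last_upd pre 0 k = 0.
Proof. by case: (lastupd_P pre 0 k) => [->//|[_]]; rewrite leqn0 => /eqP. Qed.
Lemma st1 : state pre 1 n1 = (1, true).
Proof. by rewrite /state lu1 ?Hc // !inE eqxx. Qed.
Lemma st2 : state pre 1 n2 = (1, false).
Proof. by rewrite /state lu1 ?Hc // !inE eqxx orbT. Qed.
Lemma st0 k : state pre 0 k = (0, true).
Proof. by rewrite /state lu0. Qed.
Lemma cm : committed pre = 0.
Proof.
rewrite /committed.
have [->//|[i F ->]] := maxP (fun i : 'I_(nver pre).+1 => [forall j : 'I_i.+1, complete pre j]).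
move: i F; rewrite nv => -[[|[|i]] Hi] //= F.
have := forallP F (Ordinal (isT : 1 < 2)).
move/forallP/(_ n2); rewrite updE Hc !inE eqxx orbT /=.
by [].
Qed.

Lemma nouc_U : no_uc pre (nver pre) U = false.
Proof.
apply/negbTE/negP => /forall_inP /(_ n2).
by rewrite !inE eqxx orbT nv st2 => /(_ isT).
Qed.
Lemma nouc1 : no_uc pre (nver pre) [set n1].
Proof. by apply/forall_inP => k; rewrite inE => /eqP ->; rewrite nv st1. Qed.
Lemma lg_U : lcnb_graph pre U = 0.
Proof. by rewrite /lcnb_graph nouc_U cm. Qed.
Lemma lg1 : lcnb_graph pre [set n1] = nver pre.
Proof. by rewrite /lcnb_graph nouc1. Qed.

Lemma ns_a : 2 <= nstale pre U (read LCMB (fun _ => 0) pre U).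
Proof.
rewrite /read lg_U.
rewrite (_ : monotone _ _ _ _ = true); last by apply/forall_inP.
rewrite /nstale.
apply: (@leq_trans #|U|); first by rewrite cards2.
apply: subset_leq_card; apply/subsetP => k kU; rewrite in_set kU st0 nv /=.
by move: kU; rewrite !inE => /orP[/eqP->|/eqP->]; rewrite ?st1 ?st2.
Qed.

Lemma ns_b h : nstale pre U (read ICNB h pre U) <= 1.
Proof.
rewrite /nstale /read; apply: (@leq_trans #|[set n2]|); last by rewrite cards1.
apply: subset_leq_card; apply/subsetP => k.
rewrite in_set => /andP[kU /andP[_ ne]]; rewrite inE.
move: kU; rewrite !inE => /orP[/eqP E|//]; subst k.
have : (last_comp pre n1, true) != state pre (nver pre) n1 := ne.
by rewrite nv st1 Hl eqxx.
Qed.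

Lemma rd_d h : read LCMB h pre [set n1] = state pre (nver pre).
Proof. by rewrite /read lg1; case: ifP. Qed.

Lemma rd_e h : h n1 = 1 -> read LCMB h pre U = state pre (nver pre).
Proof.
move=> H1; rewrite /read lg_U.
rewrite (_ : monotone _ _ _ _ = false) //.
apply/negbTE/negP => /forall_inP /(_ n1).
by rewrite !inE eqxx H1 st0 => /(_ isT).
Qed.

Lemma ns_f h : 1 <= nstale pre U (read ICNB h pre U).
Proof.
rewrite /nstale card_gt0; apply/set0Pn; exists n2.
have n2U : n2 \in U by rewrite !inE eqxx orbT.
rewrite in_set n2U andTb.
change (true && ((last_comp pre n2, true) != state pre (nver pre) n2)).
by rewrite nv st2 Hl.
Qed.
End Pre.

Definition pre1 : seq (event 'I_3 R) := [:: EWrite R U; ECompute R 1 n1].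
Definition pre2 : seq (event 'I_3 R) := [:: EWrite R U; ECompute R 1 n1; ERead [set n1] 0].
Definition tr1 : seq (event 'I_3 R) := [:: EWrite R U; ECompute R 1 n1; ERead U 0; ERead U 1].
Definition tr2 : seq (event 'I_3 R) :=
  [:: EWrite R U; ECompute R 1 n1; ERead [set n1] 0; ERead U 1; ERead [set n1] 2%:R].

Lemma w1 : writes pre1 = [:: U]. Proof. by []. Qed.
Lemma w2 : writes pre2 = [:: U]. Proof. by []. Qed.
Lemma c1 j k : computed pre1 j k = (j == 1) && (k == n1).
Proof. by rewrite /computed /= orbF eq_sym (eq_sym n1). Qed.
Lemma c2 j k : computed pre2 j k = (j == 1) && (k == n1).
Proof. by rewrite /computed /= !orbF eq_sym (eq_sym n1). Qed.
Lemma l1 k : last_comp pre1 k = if k == n1 then 1 else 0.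
Proof. by rewrite /last_comp /= eq_sym. Qed.
Lemma l2 k : last_comp pre2 k = if k == n1 then 1 else 0.
Proof. by rewrite /last_comp /= eq_sym. Qed.

Lemma run1 L : stale_sum (run L tr1) =
  ((nstale pre1 U (read L (fun _ => 0) pre1 U))%:R * (1 - 0) + 0)%R.
Proof. by []. Qed.

Lemma run2 L : stale_sum (run L tr2) =
  ((nstale pre1 [set n1] (read L (fun _ => 0) pre1 [set n1]))%:R * (1 - 0) +
   ((nstale pre2 U (read L (upd_hist (fun _ => 0) [set n1] (read L (fun _ => 0) pre1 [set n1])) pre2 U))%:R
     * (2%:R - 1) + 0))%R.
Proof. by []. Qed.

Lemma val_views (vp : {set 'I_3}) : vp \subset U -> vp \subset [pred k | is_view ed k].
Proof.
move=> sub; apply/subsetP => k /(subsetP sub); rewrite !inE => /orP[]/eqP->;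
  by apply/existsP; exists n0.
Qed.

Lemma vcomp : vstep [:: EWrite R U] (ECompute R 1 n1).
Proof.
have h2 : upd [:: EWrite R U] 1 n1 by rewrite /upd /= !inE eqxx.
have h4 : [forall j' : 'I_1, complete [:: EWrite R U] j'].
  apply/forallP => j'; apply/forallP => k; rewrite /upd.
  by case: j' => [[|]].
by rewrite /vstep h2 h4.
Qed.

Lemma valid1 : valid_workload (Workload ed tr1).
Proof.
split; first exact: acyc.
split.
- case=> [|[|[|[|p]]]] Hp //.
  + exact: vcomp.
  + exact: val_views.
  + exact: val_views.
- by rewrite /read_times /= ler01.
Qed.

Lemma valid2 : valid_workload (Workload ed tr2).
Proof.
split; first exact: acyc.
split.
- case=> [|[|[|[|[|p]]]]] Hp //.
  + exact: vcomp.
  + by apply: val_views; apply/subsetP => k; rewrite !inE => ->.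
  + exact: val_views.
  + by apply: val_views; apply/subsetP => k; rewrite !inE => ->.
- by rewrite /read_times /= ler01 ler1n.
Qed.
End Ex.


Lemma part1 (R : realFieldType) (w : workload R) : valid_workload w ->
     (S LCMB w <= S LCNB w /\ S ICNB w <= S LCNB w)%R.
Proof.
case: w => N e tr [_ [V So]]; rewrite /S /=; split.
- apply: (@run_le _ _ tr LCMB LCNB (fun _ => True)) => // *; exact: lcmb_le.
- apply: (@run_le _ _ tr ICNB LCNB (@Inv N R)) => //; last by move=> *; exact: icnb_le.
  apply: Inv_take => p Hp; move: (V p Hp); by case: (nth (ev0 N R) tr p).
Qed.

Local Open Scope ring_scope.

Lemma arith1 (R : realFieldType) (a b : nat) : (2 <= a)%N -> (b <= 1)%N ->
  ~ (a%:R * (1 - 0) + 0 <= b%:R * (1 - 0) + 0 :> R).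
Proof.
move=> ha hb; rewrite subr0 !mulr1 !addr0 ler_nat => h.
by have := leq_trans ha (leq_trans h hb).
Qed.

Lemma arith2 (R : realFieldType) (a b : nat) : (1 <= b)%N ->
  ~ (a%:R * (1 - 0) + (b%:R * (2%:R - 1) + 0) <= 0%:R * (1 - 0) + (0%:R * (2%:R - 1) + 0) :> R).
Proof.
move=> hb; have hb' : 1 <= b%:R :> R by rewrite ler1n.
have ha' : 0 <= a%:R :> R by rewrite ler0n.
have e : 2%:R - 1 = 1 :> R by rewrite -natr1 addrK.
rewrite e !mulr1 !mul0r !addr0 => h; lra.
Qed.

Theorem theorem2p9 (R : realFieldType) :
  (forall w : workload R, valid_workload w ->
     S LCMB w <= S LCNB w /\ S ICNB w <= S LCNB w)
  /\ ~ (forall w : workload R, valid_workload w -> S LCMB w <= S ICNB w)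
  /\ ~ (forall w : workload R, valid_workload w -> S ICNB w <= S LCMB w).
Proof.
split; first exact: part1.
split.
- move=> H; have := H _ (valid1 R); rewrite /S !run1.
  apply: arith1; first exact: ns_a (w1 R) (c1 R).
  exact: ns_b (w1 R) (c1 R) (l1 R) _.
- move=> H; have := H _ (valid2 R); rewrite /S !run2.
  rewrite (rd_d (w1 R) (c1 R)) ns_latest.
  have Hh : upd_hist (fun _ => 0%N) [set n1] (state (pre1 R) (nver (pre1 R))) n1 = 1%N.
    by rewrite /upd_hist inE eqxx (nv (w1 R)) (st1 (w1 R) (c1 R)).
  rewrite (rd_e (w2 R) (c2 R) Hh) ns_latest.
  apply: arith2; exact: ns_f (w2 R) (c2 R) (l2 R) _.
Qed.
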